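(* Let $H=(V,E)$ be a hypergraph whose vertex set $V$ is a partition of $[n]$ into sets of cardinality at least $2$, and let $D=\{\bar i_I\}_{I\in V}$ with $\bar i_I\in I$ for each $I\in V$. Then $\mathrm{MC}^H_\le(D)$ is full-dimensional in $\mathbb{R}^{\mathcal{J}^H_\le(D)}$.
   Context: Let $n$ be a positive integer, $[n]=\{1,\dots,n\}$. A hypergraph $H=(V,E)$ here has as vertex set $V$ a family of pairwise disjoint subsets of $[n]$, each of cardinality at least $2$, and hyperedge set $E$ consisting of subsets $e\subseteq V$ with $|e|\ge 2$. Write $L(V)=\{\{I\}: I\in V\}$. For a nonempty $e\subseteq V$, $\mathcal{J}^e$ denotes the family of sets $J\subseteq \bigcup_{I\in e} I$ with $|J\cap I|=1$ for every $I\in e$. Let $\mathcal{J}^H=\bigcup_{e\in L(V)\cup E}\mathcal{J}^e$. For a vector $v$ indexed by sets, write $v_i=v_{\{i\}}$ and $v(A)=\sum_{i\in A}v_i$. For $D$ as in the claim, $\mathcal{J}^H_\le(D)=\{J\in\mathcal{J}^H: J\subseteq[n]\setminus D\}$ and $\mathrm{MC}^H_\le(D)=\operatorname{conv}\{v\in\{0,1\}^{\mathcal{J}^H_\le(D)}: v(I\setminus D)\le 1\ \forall I\in V;\ v_J=\prod_{i\in J}v_i\ \forall J\in\mathcal{J}^H_\le(D), |J|>1\}$. *)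

(* Defs.v *)
From HB Require Import structures.
From mathcomp Require Import all_boot all_order all_algebra.
From mathcomp Require Import reals.
Set Implicit Arguments. Unset Strict Implicit. Unset Printing Implicit Defensive.
Import Order.TTheory GRing.Theory Num.Theory.
Local Open Scope ring_scope.

(* [n] is modelled as 'I_n = {0,...,n-1}. *)
Section Defs.
Variable n : nat.

Definition Jfam (e : {set {set 'I_n}}) : {set {set 'I_n}} :=
  [set J : {set 'I_n} | (J \subset \bigcup_(I in e) I) &&
                        [forall I in e, #|J :&: I| == 1%N]].

Definition LV (V : {set {set 'I_n}}) : {set {set {set 'I_n}}} :=
  [set [set I] | I in V].

Definition JH (V : {set {set 'I_n}}) (E : {set {set {set 'I_n}}}) :
  {set {set 'I_n}} := \bigcup_(e in LV V :|: E) Jfam e.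

Definition JHle (V : {set {set 'I_n}}) (E : {set {set {set 'I_n}}})
  (D : {set 'I_n}) : {set {set 'I_n}} := [set J in JH V E | J \subset ~: D].

Definition Jidx V E D : finType := {J : {set 'I_n} | J \in JHle V E D}.

Variable R : realType.

(* the coordinate v_J of v in R^{J^H_<=(D)} (0 if J is not an index) *)
Definition coord V E D (v : {ffun Jidx V E D -> R}) (J : {set 'I_n}) : R :=
  match insub J with Some j => v j | None => 0 end.

Definition MCpoints V E D (v : {ffun Jidx V E D -> R}) : Prop :=
  [/\ (forall j, v j = 0 \/ v j = 1),
      (forall I, I \in V -> \sum_(i in I :\: D) coord v [set i] <= 1) &
      (forall j : Jidx V E D, (1 < #|val j|)%N ->
          v j = \prod_(i in val j) coord v [set i])].
End Defs.

Section Hulls.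
Variables (R : realType) (W : lmodType R).

Definition conv (S : W -> Prop) : W -> Prop :=
  fun x => exists (k : nat) (p : 'I_k -> W) (l : 'I_k -> R),
    [/\ (forall i, S (p i)), (forall i, 0 <= l i), \sum_i l i = 1 &
        x = \sum_i l i *: p i].

Definition aff (S : W -> Prop) : W -> Prop :=
  fun x => exists (k : nat) (p : 'I_k -> W) (l : 'I_k -> R),
    [/\ (forall i, S (p i)), \sum_i l i = 1 & x = \sum_i l i *: p i].

Definition full_dimensional (S : W -> Prop) : Prop := forall y, aff S y.
End Hulls.

Definition Rspace (n : nat) (R : realType) V E D : lmodType R :=
  {ffun @Jidx n V E D -> R^o}.

Definition MC (n : nat) (R : realType) V E D : Rspace R V E D -> Prop :=
  conv (fun v : Rspace R V E D => @MCpoints n R V E D v).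

(* Main.v *)
Require Import Defs.
From HB Require Import structures.
From mathcomp Require Import all_boot all_order all_algebra.
From mathcomp Require Import reals.
Import Order.TTheory GRing.Theory Num.Theory.
Local Open Scope ring_scope.

Lemma idx_disj {n V E D} (j : @Jidx n V E D) : val j \subset ~: D.
Proof. by case: j => J /=; rewrite inE => /andP[_ ->]. Qed.

Lemma single_idx {n V E D} (hV : partition V [set: 'I_n]) (j : @Jidx n V E D) i :
  i \in val j -> [set i] \in JHle V E D.
Proof.
move=> ij.
case/and3P: hV => /eqP cov _ _.
have : i \in cover V by rewrite cov inE.
case/bigcupP => I IV iI.
rewrite inE; apply/andP; split; last first.
  by rewrite sub1set; exact: (subsetP (idx_disj j) i ij).
apply/bigcupP; exists [set I].
  by rewrite inE; apply/orP; left; apply: imset_f.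
rewrite inE big_set1 sub1set iI /=.
apply/forall_inP => I' /set1P ->.
have -> : [set i] :&: I = [set i] by apply/setIidPl; rewrite sub1set.
by rewrite cards1.
Qed.

Lemma card_le1 n V (E : {set {set {set 'I_n}}}) (D : {set 'I_n}) (hV : partition V [set: 'I_n])
  (hE : forall e, e \in E -> e \subset V) (j : @Jidx n V E D) I :
  I \in V -> (#|val j :&: I| <= 1)%N.
Proof.
move=> IV.
case: j => J /=; rewrite inE => /andP[/bigcupP [e eV Je] _].
have eV' : e \subset V.
  case/setUP: eV => [/imsetP [I0 I0V ->]|eE]; last exact: hE.
  by rewrite sub1set.
move: Je; rewrite inE => /andP[Jsub /forall_inP Jc].
case Ie: (I \in e); first by rewrite (eqP (Jc _ Ie)).
rewrite leq_eqVlt; apply/orP; right; rewrite ltnS leqn0 cards_eq0.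
apply/eqP/setP => x; rewrite !inE; apply/negP => /andP[xJ xI].
have /bigcupP [I' I'e xI'] := subsetP Jsub x xJ.
case/and3P: hV => _ /trivIsetP tV _.
have nI : I' != I by apply/eqP => eq; rewrite -eq I'e in Ie.
have := tV _ _ (subsetP eV' _ I'e) IV nI.
by move/disjointFr => /(_ x xI'); rewrite xI.
Qed.
Definition pt {R : realType} {n V E D} (K : @Jidx n V E D) : Rspace R V E D :=
  [ffun k : Jidx V E D => (if val k \subset val K then 1 else 0 : R^o)].
Definition dl {R : realType} {n V E D} (K : @Jidx n V E D) : Rspace R V E D :=
  [ffun k : Jidx V E D => (if k == K then 1 else 0 : R^o)].

Lemma coord_pt (R : realType) n V E D (K : @Jidx n V E D) i :
  Defs.coord (pt (R:=R) K) [set i] =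
  if [set i] \in JHle V E D then (i \in val K)%:R else 0.
Proof.
rewrite /Defs.coord; case: (insubP (Jidx V E D) [set i]) => [u Pu Hu|/negbTE ->] //.
rewrite -Hu (valP u) /pt ffunE Hu sub1set; by case: (i \in val K).
Qed.

Lemma MC_pt (R : realType) n V (E : {set {set {set 'I_n}}}) (D : {set 'I_n})
  (hV : partition V [set: 'I_n]) (hE : forall e, e \in E -> e \subset V)
  (K : @Jidx n V E D) : MCpoints (pt (R:=R) K).
Proof.
split.
- by move=> j; rewrite ffunE; case: ifP; auto.
- move=> I IV.
  apply: (@le_trans _ _ (\sum_(i : 'I_n) ((i \in val K :&: I) : nat)%:R)).
    rewrite [X in _ <= X](bigID (fun i => i \in I :\: D)) /= -[X in X <= _]addr0.
    apply: lerD; last by apply: sumr_ge0 => i _; rewrite ler0n.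
    apply: ler_sum => i; rewrite inE => /andP[_ iI].
    rewrite coord_pt in_setI iI andbT; case: ifP => _; [exact: lexx | by rewrite ler0n].
  rewrite -natr_sum lern1.
  have -> : (\sum_(i : 'I_n) ((i \in val K :&: I) : nat))%N = #|val K :&: I|.
    by rewrite -sum1_card [RHS]big_mkcond; apply: eq_bigr => i _; case: (_ \in _).
  exact: card_le1.
- move=> k k1.
  rewrite ffunE.
  have -> : \prod_(i in val k) Defs.coord (pt (R:=R) K) [set i] =
            \prod_(i in val k) ((i \in val K) : nat)%:R.
    by apply: eq_bigr => i ik; rewrite coord_pt (single_idx hV k i ik).
  case: ifP => sub.
    by rewrite big1 // => i ik; rewrite (subsetP sub i ik).
  case/subsetPn: (negbT sub) => i ik niK.
  by rewrite (bigD1 i) //= (negbTE niK) mul0r.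
Qed.

Lemma MC_0 (R : realType) n V (E : {set {set {set 'I_n}}}) (D : {set 'I_n}) :
  MCpoints (0 : Rspace R V E D).
Proof.
have c0 : forall i, Defs.coord (0 : Rspace R V E D) [set i] = 0.
  move=> i; rewrite /Defs.coord; by case: (insub _) => [u|] //; rewrite ffunE.
split.
- by move=> j; rewrite ffunE; auto.
- by move=> I _; rewrite big1 // => i _; rewrite c0.
- move=> k k1; rewrite ffunE.
  have /card_gt0P [i ik] : (0 < #|val k|)%N by apply: ltnW.
  by rewrite (bigD1 i) //= c0 mul0r.
Qed.

Definition lin {R : realType} {W : lmodType R} (S : W -> Prop) (y : W) :=
  exists s : seq (W * R), (forall x, x \in s -> S x.1) /\ y = \sum_(x <- s) x.2 *: x.1.

Lemma lin0 (R : realType) (W : lmodType R) (S : W -> Prop) : lin S 0.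
Proof. by exists [::]; split => //; rewrite big_nil. Qed.

Lemma linD (R : realType) (W : lmodType R) (S : W -> Prop) y z :
  lin S y -> lin S z -> lin S (y + z).
Proof.
move=> [s [hs ->]] [t [ht ->]]; exists (s ++ t); split; last by rewrite big_cat.
by move=> x; rewrite mem_cat => /orP[/hs|/ht].
Qed.

Lemma linZ (R : realType) (W : lmodType R) (S : W -> Prop) c y :
  lin S y -> lin S (c *: y).
Proof.
move=> [s [hs ->]]; exists [seq (x.1, c * x.2) | x <- s]; split.
  by move=> x /mapP [x' x's ->] /=; apply: hs.
by rewrite big_map scaler_sumr; apply: eq_bigr => x _ /=; rewrite scalerA.
Qed.

Lemma linS (R : realType) (W : lmodType R) (S : W -> Prop) y : S y -> lin S y.
Proof.
by move=> Sy; exists [:: (y, 1)]; split; [move=> x; rewrite inE => /eqP -> | rewrite big_seq1 scale1r].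
Qed.

Lemma linsum (R : realType) (W : lmodType R) (S : W -> Prop) (I : finType) (P : pred I) (F : I -> W) :
  (forall i, P i -> lin S (F i)) -> lin S (\sum_(i | P i) F i).
Proof.
move=> h; apply: (big_ind (lin S)); [exact: lin0 | exact: linD | exact: h].
Qed.

Lemma pt_sum (R : realType) n V E D (K : @Jidx n V E D) :
  pt (R:=R) K = \sum_(J : Jidx V E D | val J \subset val K) dl J.
Proof.
apply/ffunP => k; rewrite sum_ffunE ffunE.
case: ifP => sub.
  rewrite (bigD1 k) //= ffunE eqxx big1 ?addr0 // => J /andP[_ nJ].
  by rewrite ffunE eq_sym (negbTE nJ).
rewrite big1 // => J sJ; rewrite ffunE; case: eqP => // ek.
by rewrite ek sJ in sub.
Qed.

Lemma lin_dl {R : realType} {n V} {E : {set {set {set 'I_n}}}} {D : {set 'I_n}}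
  (hV : partition V [set: 'I_n]) (hE : forall e, e \in E -> e \subset V)
  (K : @Jidx n V E D) : lin (fun v : Rspace R V E D => @MCpoints n R V E D v) (dl K).
Proof.
suff: forall m (K : Jidx V E D), (#|val K| <= m)%N -> lin (fun v : Rspace R V E D => @MCpoints n R V E D v) (dl K).
  by move=> /(_ _ K (leqnn _)).
elim=> [|m IH] {}K.
  move=> K0.
  have eq : dl K = pt (R:=R) K.
    rewrite pt_sum (bigD1 K) //= big1 ?addr0 // => J /andP[sJ nJ].
    exfalso; move: K0; rewrite leqn0 cards_eq0 => /eqP K0.
    move: sJ; rewrite K0 subset0 => /eqP J0; apply/negP: nJ; rewrite negbK.
    by apply/eqP/val_inj; rewrite /= J0 K0.
  by rewrite eq; apply: linS; apply: MC_pt.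
move=> Km.
have eq : dl K = pt (R:=R) K + (-1) *: \sum_(J : Jidx V E D | (val J \subset val K) && (J != K)) dl J.
  by rewrite pt_sum (bigD1 K) //= scaleN1r addrK.
rewrite eq; apply: linD; first by apply: linS; apply: MC_pt.
apply: linZ; apply: linsum => J /andP[sJ nJ]; apply: IH.
have : val J \proper val K.
  by rewrite properEneq sJ andbT; apply: contra nJ => /eqP h; apply/eqP/val_inj.
by move/proper_card => lt; rewrite -ltnS; apply: leq_trans lt Km.
Qed.

Lemma lin_all {R : realType} {n V} {E : {set {set {set 'I_n}}}} {D : {set 'I_n}}
  (hV : partition V [set: 'I_n]) (hE : forall e, e \in E -> e \subset V)
  (y : Rspace R V E D) : lin (fun v : Rspace R V E D => @MCpoints n R V E D v) y.
Proof.
have -> : y = \sum_(K : Jidx V E D) y K *: dl K.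
  apply/ffunP => k; rewrite sum_ffunE (bigD1 k) //= big1 ?addr0.
    by rewrite !ffunE eqxx; exact: (esym (mulr1 _)).
  by move=> J nJ; rewrite !ffunE eq_sym (negbTE nJ); exact: (mulr0 _).
by apply: linsum => K _; apply: linZ; apply: lin_dl.
Qed.

Lemma aff_MC (R : realType) n V (E : {set {set {set 'I_n}}}) (D : {set 'I_n})
  (hV : partition V [set: 'I_n]) (hE : forall e, e \in E -> e \subset V) :
  full_dimensional (@MC n R V E D).
Proof.
move=> y; have [s [hs ys]] := lin_all (R:=R) hV hE y.
pose s' := (0 : Rspace R V E D, 1 - \sum_(x <- s) x.2) :: s.
have hs' : forall x, x \in s' -> MC x.1.
  move=> x; rewrite inE => /orP[/eqP -> | xs] /=.
    exists 1%N, (fun _ => 0), (fun _ => 1); split => //.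
    - by move=> _; apply: MC_0.
    - by rewrite big_ord1.
    - by rewrite big_ord1 scale1r.
  exists 1%N, (fun _ => x.1), (fun _ => 1); split => //.
  - by move=> _; apply: hs.
  - by rewrite big_ord1.
  - by rewrite big_ord1 scale1r.
pose x0 := (0 : Rspace R V E D, 0 : R).
exists (size s'), (fun i => (nth x0 s' i).1), (fun i => (nth x0 s' i).2); split.
- by move=> i; apply: hs'; apply: mem_nth.
- have -> : \sum_(i < size s') (nth x0 s' i).2 = \sum_(x <- s') x.2.
    by rewrite (big_nth x0) big_mkord.
  by rewrite big_cons subrK.
- have -> : \sum_(i < size s') (nth x0 s' i).2 *: (nth x0 s' i).1 = \sum_(x <- s') x.2 *: x.1.
    by rewrite (big_nth x0) big_mkord.
  by rewrite big_cons /= scaler0 add0r.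
Qed.

Theorem proposition3p3 (R : realType) (n : nat)
  (V : {set {set 'I_n}}) (E : {set {set {set 'I_n}}})
  (ibar : {set 'I_n} -> 'I_n) :
  (0 < n)%N ->
  partition V [set: 'I_n] ->
  (forall I, I \in V -> (2 <= #|I|)%N) ->
  (forall e, e \in E -> e \subset V /\ (2 <= #|e|)%N) ->
  (forall I, I \in V -> ibar I \in I) ->
  full_dimensional (@MC n R V E [set ibar I | I in V]).
Proof.
move=> _ hV _ hE _; apply: aff_MC => //.
by move=> e /hE [].
Qed.
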